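(* Let $\lambda\in\mathbb{C}$ be a generic parameter and consider the six equations on the eight vertex values $(u_0,u_1,u_2,u_{12},v_0,v_1,v_2,v_{12})$ of a cube: \[ \mathcal A:\ u_{12}-u_0-\frac{1}{u_2}+\frac{1}{u_1}=0,\qquad \mathcal S:\ u_0-v_{12}-\frac{1}{u_1}+\frac{\lambda}{v_2}=0, \] \[ \mathcal B:\ (u_0-v_0)\Big(\frac1{u_0}+v_2\Big)-1+\lambda=0,\qquad \mathcal B':\ (u_1-v_1)\Big(\frac1{u_1}+v_{12}\Big)-1+\lambda=0, \] \[ \mathcal C:\ \frac1{u_0}-\frac{\lambda}{v_0}-u_1+v_1=0,\qquad \mathcal C':\ \frac1{u_2}-\frac{\lambda}{v_2}-u_{12}+v_{12}=0. \] For generic initial values $u_0,u_1,u_2,v_0\in\mathbb{C}$, solve $\mathcal A=0$ for $u_{12}$, $\mathcal B=0$ for $v_2$ and $\mathcal C=0$ for $v_1$ (each as a rational function of the initial values). Then the three expressions for $v_{12}$ obtained by solving $\mathcal S=0$, $\mathcal B'=0$ and $\mathcal C'=0$ respectively coincide as rational functions of $u_0,u_1,u_2,v_0$ (i.e. the system is consistent around a broken cube). Moreover, with these values the following tetrahedron equations hold identically: \[ \mathcal K_1:\ \Big(v_{12}+\frac1{u_1}\Big)\Big(\frac1{u_0}-\frac{\lambda}{v_0}\Big)-1+\lambda=0,\qquad \mathcal K_2:\ \Big(\frac{\lambda}{v_2}+u_0\Big)(u_1-v_1)-1+\lambda=0. \]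
   Context: Hirota's discrete KdV (dKdV) equation is the partial difference equation $u_{l+1,m+1}-u_{l,m}=\frac{1}{u_{l,m+1}}-\frac{1}{u_{l+1,m}}$ for $u:\mathbb{Z}^2\to\mathbb{C}$. In the cube picture, $u_0=u_{l,m}$, $u_1=u_{l+1,m}$, $u_2=u_{l,m+1}$, $u_{12}=u_{l+1,m+1}$ and $v_0,v_1,v_2,v_{12}$ are the corresponding values of an auxiliary function $v$ on the parallel face; $\mathcal A$ is the dKdV equation. Generic means all denominators appearing are nonzero. *)

(* Defs.v *)
From HB Require Import structures.
From mathcomp Require Import all_boot all_order all_algebra.
From mathcomp Require Import complex.
From mathcomp Require Import reals.
Set Implicit Arguments. Unset Strict Implicit. Unset Printing Implicit Defensive.
Import Order.TTheory GRing.Theory Num.Theory.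
Local Open Scope ring_scope.

Section CubeEqs.
Variable C : fieldType.
Variable lam : C.

Definition faceA (u0 u1 u2 u12 : C) : C := u12 - u0 - 1 / u2 + 1 / u1.
Definition faceS (u0 u1 v2 v12 : C) : C := u0 - v12 - 1 / u1 + lam / v2.
Definition faceB (u0 v0 v2 : C) : C := (u0 - v0) * (1 / u0 + v2) - 1 + lam.
Definition faceB' (u1 v1 v12 : C) : C := (u1 - v1) * (1 / u1 + v12) - 1 + lam.
Definition faceC (u0 u1 v0 v1 : C) : C := 1 / u0 - lam / v0 - u1 + v1.
Definition faceC' (u2 u12 v2 v12 : C) : C := 1 / u2 - lam / v2 - u12 + v12.

Definition faceK1 (u0 u1 v0 v12 : C) : C :=
  (v12 + 1 / u1) * (1 / u0 - lam / v0) - 1 + lam.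
Definition faceK2 (u0 u1 v1 v2 : C) : C :=
  (lam / v2 + u0) * (u1 - v1) - 1 + lam.
End CubeEqs.

(* Main.v *)
Require Import Defs.
From HB Require Import structures.
From mathcomp Require Import all_boot all_order all_algebra.
From mathcomp Require Import complex.
From mathcomp Require Import reals.
From mathcomp Require Import ring.
Import Order.TTheory GRing.Theory Num.Theory.
Local Open Scope ring_scope.
Local Open Scope complex_scope.

Lemma main_gen (F : fieldType) (lam u0 u1 u2 v0 u12 v1 v2 : F)
  (hu0 : u0 != 0) (hu1 : u1 != 0) (hu2 : u2 != 0) (hv0 : v0 != 0)
  (hu0v0 : u0 != v0) (hv2 : v2 != 0) (hu1v1 : u1 != v1)
  (hA : faceA u0 u1 u2 u12 = 0) (hB : faceB lam u0 v0 v2 = 0)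
  (hC : faceC lam u0 u1 v0 v1 = 0) :
  forall v12 : F,
    (faceS lam u0 u1 v2 v12 = 0 <-> faceB' lam u1 v1 v12 = 0) /\
    (faceS lam u0 u1 v2 v12 = 0 <-> faceC' lam u2 u12 v2 v12 = 0) /\
    (faceS lam u0 u1 v2 v12 = 0 ->
       faceK1 lam u0 u1 v0 v12 = 0 /\ faceK2 lam u0 u1 v1 v2 = 0).
Proof.
move=> v12.
have hne : u0 - v0 != 0 by rewrite subr_eq0.
have hw : u1 - v1 != 0 by rewrite subr_eq0.
move: hA hB hC; rewrite /faceA /faceB /faceC => hA' hB' hC'.
have ev2 : v2 = (v0 - lam*u0)/(u0*(u0-v0)).
  have -> : v2 = (((u0-v0)*(1/u0+v2) -1 + lam) + 1 - lam)/(u0-v0) - 1/u0 by field; rewrite hu0 hne.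
  rewrite hB'; field; by rewrite hne hu0.
have ew : u1 - v1 = 1/u0 - lam/v0.
  have -> : v1 = (1 / u0 - lam / v0 - u1 + v1) - 1/u0 + lam/v0 + u1 by ring.
  rewrite hC'; ring.
have hvl : v0 - lam*u0 != 0.
  apply/negP => /eqP h; move/negP: hv2; apply; rewrite ev2 h mul0r; done.
have K : (lam/v2+u0)*(u1-v1) = 1-lam.
  rewrite ew ev2; field; by rewrite hvl hu0 hne hv0.
have SB : faceS lam u0 u1 v2 v12 = 0 <-> faceB' lam u1 v1 v12 = 0.
  rewrite /faceS /faceB'; split => h.
  - have ev12 : v12 = u0 - 1/u1 + lam/v2.
      have -> : v12 = -(u0 - v12 - 1/u1 + lam/v2) + (u0 - 1/u1 + lam/v2) by ring.
      by rewrite h oppr0 add0r.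
    rewrite ev12.
    have -> : (u1 - v1) * (1 / u1 + (u0 - 1/u1 + lam/v2)) - 1 + lam
             = (lam/v2+u0)*(u1-v1) - (1-lam) by field; rewrite ?hu1 ?hv2.
    by rewrite K subrr.
  - have -> : v12 = (((u1 - v1) * (1 / u1 + v12) - 1 + lam) + 1 - lam)/(u1-v1) - 1/u1 by field; rewrite hw hu1.
    rewrite h add0r -K mulfK //; ring.
split; first exact: SB.
split.
  have -> : faceC' lam u2 u12 v2 v12 = - faceS lam u0 u1 v2 v12 - (u12 - u0 - 1 / u2 + 1 / u1).
    rewrite /faceC' /faceS; ring.
  rewrite hA' subr0; split => h; first by rewrite h oppr0.
  by rewrite -[faceS _ _ _ _ _]opprK h oppr0.
move=> hS; split; last by rewrite /faceK2 K; ring.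
move: hS; rewrite /faceS /faceK1 => h.
have ev12 : v12 = u0 - 1/u1 + lam/v2.
  have -> : v12 = -(u0 - v12 - 1/u1 + lam/v2) + (u0 - 1/u1 + lam/v2) by ring.
  by rewrite h oppr0 add0r.
rewrite ev12 -ew.
have -> : (u0 - 1/u1 + lam/v2 + 1 / u1) * (u1 - v1) - 1 + lam
   = (lam/v2+u0)*(u1-v1) - (1-lam) by ring.
by rewrite K subrr.
Qed.

Theorem mainTheorem1 (R : realType) (lam u0 u1 u2 v0 u12 v1 v2 : R[i])
  (hu0 : u0 != 0) (hu1 : u1 != 0) (hu2 : u2 != 0) (hv0 : v0 != 0)
  (hu0v0 : u0 != v0) (hv2 : v2 != 0) (hu1v1 : u1 != v1)
  (hA : faceA u0 u1 u2 u12 = 0) (hB : faceB lam u0 v0 v2 = 0)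
  (hC : faceC lam u0 u1 v0 v1 = 0) :
  forall v12 : R[i],
    (faceS lam u0 u1 v2 v12 = 0 <-> faceB' lam u1 v1 v12 = 0) /\
    (faceS lam u0 u1 v2 v12 = 0 <-> faceC' lam u2 u12 v2 v12 = 0) /\
    (faceS lam u0 u1 v2 v12 = 0 ->
       faceK1 lam u0 u1 v0 v12 = 0 /\ faceK2 lam u0 u1 v1 v2 = 0).
Proof. exact: main_gen. Qed.
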